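(* There is a constant $C$ depending only on $D$ such that for every $w,z\in\mathbb{S}^D_+$ and every $\pi\in\Pi(z+w)$ there exists $\pi'\in\Pi(z)$ with $\displaystyle\int_0^1|\pi(s)-\pi'(s)|\,ds\le C\,K(z,|w|).$
   Context: $\mathbb{S}^D$ is the space of real symmetric $D\times D$ matrices with entrywise inner product $a\cdot b=\sum_{i,j}a_{ij}b_{ij}$ and norm $|a|=\sqrt{a\cdot a}$; $\mathbb{S}^D_+$ is the set of positive semidefinite ones; $a\succeq b$ means $a\cdot c\ge b\cdot c$ for all $c\in\mathbb{S}^D_+$. $\Pi$ is the set of left-continuous maps $\pi:[0,1]\to\mathbb{S}^D_+$ with $\pi(s')\succeq\pi(s)$ for $s'\ge s$, and $\Pi(z)=\{\pi\in\Pi:\pi(1)=z\}$. For $z\in\mathbb{S}^D_+\setminus\{0\}$, $m(z)$ denotes the smallest positive eigenvalue of $z$. For $z\in\mathbb{S}^D_+$ and $r\ge0$, $K(z,r)=(|z|+r)\big(1+|z|^{1/2}m(z)^{-1/2}\big)m(z)^{-1/2}r^{1/2}+\sqrt{(|z|+r)r}$ if $z\neq0$, and $K(0,r)=r$. *)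

(* Defs.v *)
From HB Require Import structures.
From mathcomp Require Import all_boot all_order all_algebra.
From mathcomp Require Import all_classical all_reals all_analysis.
Set Implicit Arguments. Unset Strict Implicit. Unset Printing Implicit Defensive.
Import Order.TTheory GRing.Theory Num.Theory.
Import numFieldNormedType.Exports.
Local Open Scope classical_set_scope.
Local Open Scope ring_scope.

Section Defs.
Variables (R : realType) (D : nat).

Definition mdot (a b : 'M[R]_D) : R := \sum_i \sum_j a i j * b i j.
Definition mnorm (a : 'M[R]_D) : R := Num.sqrt (mdot a a).

Definition symmetric (a : 'M[R]_D) : Prop := a^T = a.
Definition psd (a : 'M[R]_D) : Prop :=
  symmetric a /\ forall v : 'cV[R]_D, 0 <= (v^T *m a *m v) 0 0.
Definition mge (a b : 'M[R]_D) : Prop :=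
  forall c, psd c -> mdot b c <= mdot a c.

(* Pi: left-continuous, S^D_+-valued, nondecreasing maps on [0,1]
   (values of pi outside [0,1] are irrelevant). *)
Definition in_Pi (pi : R -> 'M[R]_D) : Prop :=
  (forall s, 0 <= s <= 1 -> psd (pi s)) /\
  (forall s s', 0 <= s -> s <= s' -> s' <= 1 -> mge (pi s') (pi s)) /\
  (forall s, 0 < s <= 1 -> forall i j,
      (fun t => pi t i j) @ at_left s --> pi s i j).

Definition in_Pi_z (z : 'M[R]_D) (pi : R -> 'M[R]_D) : Prop :=
  in_Pi pi /\ pi 1 = z.

Definition mpos (z : 'M[R]_D) : R :=
  inf [set l : R | 0 < l /\ eigenvalue z l].

Definition Kfun (z : 'M[R]_D) (r : R) : R :=
  if z == 0 then r
  else (mnorm z + r) * (1 + Num.sqrt (mnorm z) / Num.sqrt (mpos z))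
         / Num.sqrt (mpos z) * Num.sqrt r
       + Num.sqrt ((mnorm z + r) * r).

End Defs.

(* Main.v *)
Require Import Defs.
From HB Require Import structures.
From mathcomp Require Import all_boot all_order all_algebra.
From mathcomp Require Import all_classical all_reals all_analysis.
From mathcomp Require Import ring lra.
Import Order.TTheory GRing.Theory Num.Theory.
Import numFieldNormedType.Exports.
Local Open Scope classical_set_scope.
Local Open Scope ring_scope.
Set Implicit Arguments. Unset Strict Implicit. Unset Printing Implicit Defensive.

Section Aux.
Variable R : realType.

Lemma quad_cs (p b q : R) : 0 <= p -> 0 <= q ->
  (forall t, 0 <= p + 2 * t * b + t ^+ 2 * q) -> b ^+ 2 <= p * q.
Proof.
move=> p0 q0 H.
have [qe|qn0] := eqVneq q 0.
  subst q.
  have [->|bn0] := eqVneq b 0; first by rewrite expr0n /= mulr0.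
  have := H (- (p + 1) / (2 * b)).
  have -> : 2 * (- (p + 1) / (2 * b)) * b = - (p + 1) by field; rewrite bn0.
  move=> HH; rewrite mulr0 in HH *; lra.
have qp : 0 < q by rewrite lt_def qn0 q0.
have := H (- b / q).
have -> : p + 2 * (- b / q) * b + (- b / q) ^+ 2 * q = (p * q - b ^+ 2) / q.
  by field.
by rewrite pmulr_lge0 ?invr_gt0 // subr_ge0.
Qed.

Lemma cs_sum (I : finType) (a c : I -> R) :
  (\sum_i a i * c i) ^+ 2 <= (\sum_i a i ^+ 2) * (\sum_i c i ^+ 2).
Proof.
apply: quad_cs; [by apply: sumr_ge0 => i _; exact: sqr_ge0|
  by apply: sumr_ge0 => i _; exact: sqr_ge0|] => t.
have -> : (\sum_i a i ^+ 2) + 2 * t * (\sum_i a i * c i) + t ^+ 2 * (\sum_i c i ^+ 2)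
   = \sum_i (a i + t * c i) ^+ 2.
  rewrite !mulr_sumr -!big_split /=; apply: eq_bigr => i _; ring.
by apply: sumr_ge0 => i _; exact: sqr_ge0.
Qed.

Lemma le_sqrt_sq (s P : R) : 0 <= P -> s ^+ 2 <= P -> `|s| <= Num.sqrt P.
Proof. by move=> P0 H; rewrite -sqrtr_sqr ler_sqrt. Qed.

End Aux.

Section Forms.
Variables (R : realType) (n : nat).
Implicit Types (Y A : 'M[R]_n) (u v : 'cV[R]_n).

Definition bf Y u v : R := (u^T *m Y *m v) 0 0.
Definition nv v : R := \sum_i v i 0 ^+ 2.
Definition ev (i : 'I_n) : 'cV[R]_n := delta_mx i 0.

Lemma bfE Y u v : bf Y u v = \sum_i \sum_j u i 0 * Y i j * v j 0.
Proof.
rewrite /bf mxE; under eq_bigr => j _ do rewrite mxE big_distrl /=.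
rewrite exchange_big; apply: eq_bigr => i _; apply: eq_bigr => j _.
by rewrite !mxE.
Qed.

Lemma bfDl Y u1 u2 v : bf Y (u1 + u2) v = bf Y u1 v + bf Y u2 v.
Proof.
rewrite !bfE -big_split; apply: eq_bigr => i _; rewrite -big_split.
apply: eq_bigr => j _; rewrite !mxE /=; ring.
Qed.

Lemma bfDr Y u v1 v2 : bf Y u (v1 + v2) = bf Y u v1 + bf Y u v2.
Proof.
rewrite !bfE -big_split; apply: eq_bigr => i _; rewrite -big_split.
by apply: eq_bigr => j _; rewrite !mxE /=; ring.
Qed.

Lemma bfNl Y u v : bf Y (- u) v = - bf Y u v.
Proof.
rewrite !bfE -sumrN; apply: eq_bigr => i _; rewrite -sumrN.
by apply: eq_bigr => j _; rewrite !mxE /=; ring.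
Qed.

Lemma bfNr Y u v : bf Y u (- v) = - bf Y u v.
Proof.
rewrite !bfE -sumrN; apply: eq_bigr => i _; rewrite -sumrN.
by apply: eq_bigr => j _; rewrite !mxE /=; ring.
Qed.

Lemma bfZl Y t u v : bf Y (t *: u) v = t * bf Y u v.
Proof.
rewrite !bfE mulr_sumr; apply: eq_bigr => i _; rewrite mulr_sumr.
by apply: eq_bigr => j _; rewrite !mxE /=; ring.
Qed.

Lemma bfZr Y t u v : bf Y u (t *: v) = t * bf Y u v.
Proof.
rewrite !bfE mulr_sumr; apply: eq_bigr => i _; rewrite mulr_sumr.
by apply: eq_bigr => j _; rewrite !mxE /=; ring.
Qed.

Lemma bfMD Y1 Y2 u v : bf (Y1 + Y2) u v = bf Y1 u v + bf Y2 u v.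
Proof. by rewrite /bf mulmxDr mulmxDl mxE. Qed.

Lemma bfMN Y u v : bf (- Y) u v = - bf Y u v.
Proof. by rewrite /bf mulmxN mulNmx mxE. Qed.

Lemma bfMB Y1 Y2 u v : bf (Y1 - Y2) u v = bf Y1 u v - bf Y2 u v.
Proof. by rewrite bfMD bfMN. Qed.

Lemma bfMZ t Y u v : bf (t *: Y) u v = t * bf Y u v.
Proof. by rewrite /bf -scalemxAr -scalemxAl mxE. Qed.

Lemma bf_cong Y (P : 'M[R]_n) u v : bf (P^T *m Y *m P) u v = bf Y (P *m u) (P *m v).
Proof. by rewrite /bf trmx_mul !mulmxA. Qed.

Lemma bf_sym Y u v : Y^T = Y -> bf Y u v = bf Y v u.
Proof.
move=> sY; rewrite !bfE exchange_big; apply: eq_bigr => i _; apply: eq_bigr => j _.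
have -> : Y j i = Y i j by rewrite -{1}sY mxE.
ring.
Qed.

Lemma bf_ev Y i j : bf Y (ev i) (ev j) = Y i j.
Proof.
by rewrite /bf /ev trmx_delta -rowE -colE !mxE.
Qed.

Lemma nvE v : nv v = bf 1%:M v v.
Proof.
rewrite bfE /nv; apply: eq_bigr => i _.
rewrite (bigD1 i) //= big1 ?addr0; first by rewrite !mxE eqxx mulr1 expr2.
by move=> j /negbTE ji; rewrite !mxE eq_sym ji mulr0 mul0r.
Qed.

Lemma nv_ge0 v : 0 <= nv v.
Proof. by apply: sumr_ge0 => i _; exact: sqr_ge0. Qed.

Lemma nv_eq0 v : nv v = 0 -> v = 0.
Proof.
move=> /eqP; rewrite psumr_eq0 => [/allP H|i _]; last exact: sqr_ge0.
apply/matrixP => i j; rewrite (ord1 j) mxE.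
by have /(_ (mem_index_enum i))/implyP/(_ isT) := H i; rewrite sqrf_eq0 => /eqP.
Qed.

Lemma nv_ev i : nv (ev i) = 1.
Proof.
rewrite /nv (bigD1 i) //= big1 ?addr0; first by rewrite !mxE !eqxx expr1n.
by move=> j /negbTE ji; rewrite !mxE ji /= expr0n.
Qed.

Lemma nv_tr v : nv v = (v^T *m v) 0 0.
Proof.
by rewrite mxE /nv; apply: eq_bigr => i _; rewrite mxE expr2.
Qed.

Lemma bf_quad Y u v t : Y^T = Y ->
  bf Y (u + t *: v) (u + t *: v) = bf Y u u + 2 * t * bf Y u v + t ^+ 2 * bf Y v v.
Proof.
move=> sY; rewrite !bfDl !bfDr !bfZl !bfZr (bf_sym u v sY); ring.
Qed.

Lemma bf_cs Y u v : Y^T = Y -> (forall t, 0 <= bf Y (u + t *: v) (u + t *: v)) ->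
  0 <= bf Y u u -> 0 <= bf Y v v -> bf Y u v ^+ 2 <= bf Y u u * bf Y v v.
Proof.
move=> sY H u0 v0; apply: quad_cs => // t; rewrite -bf_quad //; exact: H.
Qed.

Lemma psd_cs Y u v : psd Y -> bf Y u v ^+ 2 <= bf Y u u * bf Y v v.
Proof. by case=> sY H; apply: bf_cs => // *; exact: H. Qed.

Lemma psd_cs_abs Y u v : psd Y -> `|bf Y u v| <= Num.sqrt (bf Y u u * bf Y v v).
Proof.
move=> pY; apply: le_sqrt_sq; last exact: psd_cs.
by apply: mulr_ge0; case: pY => _ H; exact: H.
Qed.

Lemma mdotE A B : mdot A B = \sum_i \sum_j A i j * B i j.
Proof. by []. Qed.

Lemma mnorm_ge0 A : 0 <= mnorm A.
Proof. exact: sqrtr_ge0. Qed.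

Lemma mdot_ge0 A : 0 <= mdot A A.
Proof. by apply: sumr_ge0 => i _; apply: sumr_ge0 => j _; by rewrite -expr2 sqr_ge0. Qed.

Lemma mnorm_sq A : mnorm A ^+ 2 = mdot A A.
Proof. by rewrite sqr_sqrtr // mdot_ge0. Qed.

Lemma bf_bound A v : bf A v v <= mnorm A * nv v.
Proof.
have H := cs_sum (fun p : 'I_n * 'I_n => A p.1 p.2) (fun p => v p.1 0 * v p.2 0).
have E1 : bf A v v = \sum_(p : 'I_n * 'I_n) A p.1 p.2 * (v p.1 0 * v p.2 0).
  rewrite bfE -(pair_bigA _ (fun i j => A i j * (v i 0 * v j 0))) /=.
  by apply: eq_bigr => i _; apply: eq_bigr => j _; ring.
have E2 : mdot A A = \sum_(p : 'I_n * 'I_n) A p.1 p.2 ^+ 2.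
  rewrite mdotE -(pair_bigA _ (fun i j => A i j ^+ 2)) /=.
  by apply: eq_bigr => i _; apply: eq_bigr => j _; ring.
have E3 : nv v ^+ 2 = \sum_(p : 'I_n * 'I_n) (v p.1 0 * v p.2 0) ^+ 2.
  rewrite /nv expr2 mulr_suml -(pair_bigA _ (fun i j => (v i 0 * v j 0) ^+ 2)) /=.
  apply: eq_bigr => i _.
  by rewrite mulr_sumr; apply: eq_bigr => j _; ring.
rewrite -E1 -E2 -E3 in H.
apply: le_trans (ler_norm _) _.
rewrite /mnorm -(ger0_norm (nv_ge0 v)) -(sqrtr_sqr (nv v)) -sqrtrM ?mdot_ge0 //.
exact: le_sqrt_sq (mulr_ge0 (mdot_ge0 _) (sqr_ge0 _)) H.
Qed.

Lemma nv_mul A v : nv (A *m v) <= mnorm A ^+ 2 * nv v.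
Proof.
rewrite mnorm_sq mdotE /nv mulr_suml; apply: ler_sum => i _.
rewrite mxE.
have -> : \sum_j A i j * A i j = \sum_j A i j ^+ 2 by apply: eq_bigr => j _; rewrite expr2.
exact: (cs_sum (fun j => A i j) (fun j => v j 0)).
Qed.

Lemma vvT_psd v : psd (v *m v^T).
Proof.
split; first by rewrite /Defs.symmetric trmx_mul trmxK.
move=> u; have -> : (u^T *m (v *m v^T) *m u) 0 0 = bf (v *m v^T) u u by [].
rewrite bfE.
have -> : \sum_i \sum_j u i 0 * (v *m v^T) i j * u j 0 = (\sum_i u i 0 * v i 0) ^+ 2.
  rewrite expr2 mulr_suml; apply: eq_bigr => i _; rewrite mulr_sumr.
  apply: eq_bigr => j _; rewrite !mxE big_ord1 !mxE; ring.
exact: sqr_ge0.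
Qed.

Lemma mdot_vvT A v : mdot A (v *m v^T) = bf A v v.
Proof.
rewrite mdotE bfE; apply: eq_bigr => i _; apply: eq_bigr => j _.
rewrite !mxE big_ord1 !mxE; ring.
Qed.

Lemma mge_bf A B v : mge A B -> bf B v v <= bf A v v.
Proof. by move=> H; rewrite -!mdot_vvT; apply: H; exact: vvT_psd. Qed.

Lemma mdot_tr A B : mdot A B = \tr (A^T *m B).
Proof.
rewrite mdotE /mxtrace exchange_big; apply: eq_bigr => j _.
by rewrite mxE; apply: eq_bigr => i _; rewrite mxE.
Qed.

Lemma psd_cong Y (P : 'M[R]_n) : psd Y -> psd (P^T *m Y *m P).
Proof.
case=> sY H; split.
  by rewrite /Defs.symmetric !trmx_mul trmxK sY mulmxA.
move=> v; have := H (P *m v).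
have -> : (v^T *m (P^T *m Y *m P) *m v) 0 0 = bf (P^T *m Y *m P) v v by [].
by rewrite bf_cong.
Qed.

Lemma mdot_cong Y C (P : 'M[R]_n) : mdot (P^T *m Y *m P) C = mdot Y (P *m C *m P^T).
Proof.
rewrite !mdot_tr !trmx_mul trmxK -!mulmxA mxtrace_mulC -!mulmxA.
by rewrite mxtrace_mulC !mulmxA.
Qed.

Lemma mdotDl A1 A2 C : mdot (A1 + A2) C = mdot A1 C + mdot A2 C.
Proof.
rewrite !mdotE -big_split; apply: eq_bigr => i _; rewrite -big_split.
by apply: eq_bigr => j _; rewrite !mxE mulrDl.
Qed.

Lemma mdotZl t A C : mdot (t *: A) C = t * mdot A C.
Proof.
rewrite !mdotE mulr_sumr; apply: eq_bigr => i _; rewrite mulr_sumr.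
by apply: eq_bigr => j _; rewrite !mxE mulrA.
Qed.

Lemma entry_bound A B : 0 <= B -> (forall i j, `|A i j| <= B) -> mnorm A <= n%:R * B.
Proof.
move=> B0 H.
rewrite /mnorm -(ger0_norm (mulr_ge0 (ler0n _ n) B0)) -sqrtr_sqr ler_sqrt ?sqr_ge0 //.
rewrite mdotE.
have -> : (n%:R * B) ^+ 2 = \sum_(i < n) \sum_(j < n) B ^+ 2.
  by rewrite !sumr_const card_ord -mulr_natl -mulr_natl; ring.
apply: ler_sum => i _; apply: ler_sum => j _.
rewrite -expr2 -real_normK ?num_real //.
by rewrite lerXn2r ?nnegrE ?normr_ge0 // ?H.
Qed.

End Forms.
Arguments ev {R n} i.

Section Proj.
Variables (R : realType) (n : nat).
Implicit Types (z : 'M[R]_n).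

Lemma rowv_eq0 (v : 'rV[R]_n) : (v *m v^T) 0 0 = 0 -> v = 0.
Proof.
move=> H; apply: trmx_inj; rewrite trmx0; apply: nv_eq0.
by rewrite nv_tr trmxK.
Qed.

Lemma exP z : z^T = z ->
  exists P : 'M[R]_n, z *m P = z /\ forall v : 'cV[R]_n, exists x, P *m v = z *m x.
Proof.
move=> sz.
have capz : (z :&: kermx z)%MS == 0.
  apply/rowV0P => v; rewrite sub_capmx => /andP[/submxP[x ->] /sub_kermxP H].
  apply: rowv_eq0.
  have -> : x *m z *m (x *m z)^T = x *m z *m z *m x^T.
    by rewrite trmx_mul sz !mulmxA.
  by rewrite H mul0mx mxE.
have rk : \rank (z *m z) = \rank z.
  by have := mxrank_mul_ker z z; rewrite (eqP capz) mxrank0 addn0.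
have sub : (z <= z *m z)%MS.
  by rewrite -(mxrank_leqif_sup (submxMl z z)).2 rk.
set G := pinvmx (z *m z).
have E : z *m G *m (z *m z) = z by exact: mulmxKpV.
exists (z *m (z *m G)^T); split.
  rewrite mulmxA; have -> : z *m z = (z *m z)^T by rewrite trmx_mul sz.
  by rewrite -trmx_mul E sz.
by move=> v; exists ((z *m G)^T *m v); rewrite mulmxA.
Qed.

End Proj.

Section Lam.
Variables (R : realType) (n : nat) (z : 'M[R]_n).
Hypothesis pz : psd z.
Hypothesis z0 : z != 0.
Implicit Types (u v : 'cV[R]_n).

Definition Vs (v : 'cV[R]_n) := exists x, v = z *m x.

Let sz : z^T = z. Proof. by case: pz. Qed.

Let bfz_ge0 v : 0 <= bf z v v. Proof. by case: pz => _ H; exact: H. Qed.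

Lemma V_ker v : Vs v -> z *m v = 0 -> v = 0.
Proof.
move=> [x ->] H; apply: nv_eq0.
by rewrite nv_tr trmx_mul sz -mulmxA H mulmx0 mxE.
Qed.

Lemma VD u v : Vs u -> Vs v -> Vs (u + v).
Proof. by move=> [x ->] [y ->]; exists (x + y); rewrite mulmxDr. Qed.

Lemma VZ t v : Vs v -> Vs (t *: v).
Proof. by move=> [x ->]; exists (t *: x); rewrite scalemxAr. Qed.

Lemma VN v : Vs v -> Vs (- v).
Proof. by move=> Vv; rewrite -scaleN1r; exact: VZ. Qed.

Lemma Vz v : Vs (z *m v).
Proof. by exists v. Qed.

Lemma nv_gt0 v : v != 0 -> 0 < nv v.
Proof.
move=> vn0; rewrite lt_def nv_ge0 andbT; apply/eqP => /nv_eq0 v0.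
by rewrite v0 eqxx in vn0.
Qed.

Lemma nv0 : nv (0 : 'cV[R]_n) = 0.
Proof. by rewrite /nv big1 // => i _; rewrite mxE expr0n. Qed.

Lemma bf00 (Y : 'M[R]_n) : bf Y 0 0 = 0.
Proof. by rewrite /bf trmx0 !mul0mx mxE. Qed.

Lemma lam_main : exists P : 'M[R]_n, z *m P = z /\ (forall v, Vs (P *m v)) /\
  0 < mpos z /\ (forall v, Vs v -> mpos z * nv v <= bf z v v).
Proof.
have [P [hP hPV]] := @exP R n z sz.
exists P; split => //; split; first by move=> v; have [x ->] := hPV v; exact: Vz.
pose S := [set y : R | exists v, [/\ Vs v, v != 0 & y = bf z v v / nv v]].
pose l := inf S.
have [i [j zij]] : exists i j, z i j != 0.
  case: (pselect (exists i j, z i j != 0)) => // H; exfalso.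
  move/eqP: z0; apply; apply/matrixP => i j; rewrite mxE.
  by case: (eqVneq (z i j) 0) => // Hij; exfalso; apply: H; exists i, j.
have ezn0 : z *m ev j != 0.
  apply/eqP => /matrixP /(_ i 0); rewrite /ev -colE !mxE => /eqP.
  by rewrite (negbTE zij).
have S0 : S !=set0 by exists (bf z (z *m ev j) (z *m ev j) / nv (z *m ev j)), (z *m ev j); split => //; exact: Vz.
have lb : lbound S 0.
  by move=> y [v [_ _ ->]]; apply: divr_ge0 => //; exact: nv_ge0.
have hl : has_lbound S by exists 0.
have key1 : forall v, Vs v -> l * nv v <= bf z v v.
  move=> v Vv; have [->|vn0] := eqVneq v 0; first by rewrite nv0 bf00 mulr0.
  have := ge_inf hl (ex_intro _ v (And3 Vv vn0 erefl)).
  by rewrite -ler_pdivlMr ?nv_gt0.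
have l0 : 0 <= l by exact: lb_le_inf S0 lb.
have [v [Vv [vn0 zv]]] : exists v, Vs v /\ v != 0 /\ z *m v = l *: v.
  case: (pselect (exists v, Vs v /\ v != 0 /\ z *m v = l *: v)) => // Hno.
  exfalso.
  pose B := z - l *: 1%:M.
  have Bv : forall v, B *m v = z *m v - l *: v.
    by move=> v; rewrite mulmxBl -scalemxAl mul1mx.
  have VB : forall v, Vs v -> Vs (B *m v).
    by move=> v Vv; rewrite Bv; apply: VD; [exact: Vz|apply: VN; exact: VZ].
  have HB : forall v, Vs v -> B *m v = 0 -> v = 0.
    move=> v Vv; rewrite Bv => /eqP; rewrite subr_eq0 => /eqP e.
    by case: (eqVneq v 0) => // vn0; exfalso; apply: Hno; exists v.
  have Pfix : forall v, Vs v -> P *m v = v.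
    move=> v Vv; apply/eqP; rewrite -subr_eq0; apply/eqP; apply: V_ker.
      by apply: VD => //; apply: VN.
    by rewrite mulmxBr mulmxA hP subrr.
  pose N := B *m P + (1%:M - P).
  have Nx : forall x : 'cV[R]_n, N *m x = B *m (P *m x) + (x - P *m x).
    by move=> x; rewrite /N (mulmxDl (B *m P) (1%:M - P) x) (mulmxBl 1%:M P x) mul1mx mulmxA.
  have Nunit : N \in unitmx.
    rewrite unitmxE -det_tr unitfE; apply/negP => /det0P[u un0 uN].
    have Nu : N *m u^T = 0 by rewrite -(trmxK N) -trmx_mul uN trmx0.
    suff : u^T = 0 by move=> /(congr1 trmx); rewrite trmxK trmx0 => u0; rewrite u0 eqxx in un0.
    set x := u^T in Nu *.
    have Vy : Vs (P *m x) by [].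
    have zw : z *m (x - P *m x) = 0 by rewrite mulmxBr mulmxA hP subrr.
    move: Nu; rewrite Nx => /eqP; rewrite addr_eq0 => /eqP we.
    have we' : x - P *m x = - (B *m (P *m x)) by rewrite we opprK.
    have w0 : x - P *m x = 0.
      by apply: V_ker => //; rewrite we'; apply: VN; exact: VB.
    have y0 : P *m x = 0.
      by apply: HB => //; rewrite w0 in we; rewrite we oppr0.
    by move/eqP: w0; rewrite y0 subr0 => /eqP.
  set Ni := invmx N.
  have NV : forall v, Vs v -> v = Ni *m (B *m v).
    move=> v Vv; rewrite -{2}(Pfix v Vv).
    have -> : B *m (P *m v) = N *m v by rewrite Nx Pfix // subrr addr0.
    by rewrite mulmxA mulVmx // mul1mx.
  have sB : B^T = B by rewrite /B linearB /= linearZ /= trmx1 sz.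
  have bfB : forall v, Vs v -> bf B v v = bf z v v - l * nv v.
    by move=> v Vv; rewrite bfMB bfMZ -nvE.
  have bfB0 : forall v, Vs v -> 0 <= bf B v v.
    by move=> v Vv; rewrite bfB // subr_ge0; exact: key1.
  have bfBB : forall v, bf B v (B *m v) = nv (B *m v).
    by move=> v; rewrite nv_tr /bf trmx_mul sB !mulmxA.
  set K0 := mnorm Ni ^+ 2 * mnorm B + 1.
  have K0p : 0 < K0 by rewrite /K0 ltr_pwDr // mulr_ge0 ?sqr_ge0 ?mnorm_ge0.
  have key2 : forall v, Vs v -> nv v <= K0 * bf B v v.
    move=> v Vv.
    have h1 : nv v <= mnorm Ni ^+ 2 * nv (B *m v) by rewrite {1}(NV v Vv); exact: nv_mul.
    have h2 : nv (B *m v) ^+ 2 <= bf B v v * (mnorm B * nv (B *m v)).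
      rewrite -{1}bfBB; apply: le_trans (bf_cs sB _ _ _) _.
      - by move=> t; apply: bfB0; apply: VD => //; apply: VZ; exact: VB.
      - exact: bfB0.
      - exact/bfB0/VB.
      - by apply: ler_wpM2l; [exact: bfB0|exact: bf_bound].
    have h3 := nv_ge0 (B *m v).
    have h4 := bfB0 v Vv.
    have h5 := mnorm_ge0 B.
    have h6 : nv (B *m v) <= bf B v v * mnorm B.
      rewrite leNgt; apply/negP => H.
      have X0 : 0 < nv (B *m v) := le_lt_trans (mulr_ge0 h4 h5) H.
      have : nv (B *m v) * (bf B v v * mnorm B) < nv (B *m v) * nv (B *m v).
        by rewrite ltr_pM2l.
      nra.
    have h7 : 0 <= mnorm Ni ^+ 2 := sqr_ge0 _.
    rewrite /K0; nra.
  have : l + K0^-1 <= l.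
    rewrite {2}/l; apply: (lb_le_inf S0) => y [v [Vv vn0 ->]].
    rewrite ler_pdivlMr ?nv_gt0 //.
    have := key2 v Vv; rewrite bfB // -ler_pdivrMl // => h.
    have : nv v / K0 <= bf z v v - l * nv v by rewrite mulrC.
    by rewrite mulrDl mulrC; lra.
  by rewrite gerDl invr_le0 leNgt K0p.
have lpos : 0 < l.
  rewrite lt_def l0 andbT; apply/eqP => le0.
  by move: zv; rewrite le0 scale0r => /(V_ker Vv) v0; rewrite v0 eqxx in vn0.
have mE : mpos z = l.
  rewrite /mpos; set E := [set l0 : R | _].
  have lE : E l.
    split => //; apply/eigenvalueP; exists v^T.
      by rewrite -sz -trmx_mul zv linearZ.
    by apply: contra vn0 => /eqP/(congr1 trmx); rewrite trmxK trmx0 => ->.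
  have lbE : lbound E l.
    move=> m [m0 /eigenvalueP [u uz un0]].
    set x := u^T.
    have zx : z *m x = m *: x by rewrite /x -sz -trmx_mul uz linearZ.
    have Vx : Vs x.
      exists (m^-1 *: x); rewrite -scalemxAr zx scalerA mulVf ?scale1r //.
      by rewrite gt_eqF.
    have xn0 : x != 0.
      by apply: contra un0 => /eqP/(congr1 trmx); rewrite /x trmxK trmx0 => ->.
    have := key1 x Vx.
    have -> : bf z x x = m * nv x.
      by rewrite /bf -mulmxA zx -scalemxAr mxE nv_tr.
    by rewrite ler_pM2r // nv_gt0.
  apply/le_anti/andP; split.
    apply: ge_inf => //; exists 0 => y [y0 _]; exact: ltW.
  by apply: lb_le_inf => //; exists l.
rewrite mE; split => // w Vw; exact: key1.
Qed.

End Lam.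

Section Helpers.
Variables (R : realType) (n : nat).
Implicit Types (Y A : 'M[R]_n) (u v : 'cV[R]_n).

Lemma cvg_sumR (F : set_system R) (FF : Filter F) (f : 'I_n -> R -> R) (l : 'I_n -> R) :
  (forall i, f i t @[t --> F] --> l i) -> (\sum_i f i t) @[t --> F] --> \sum_i l i.
Proof.
move=> H; rewrite unlock /reducebig.
elim: (index_enum 'I_n) => [|x r IH] /=.
  exact: cvg_cst.
exact: cvgD.
Qed.

Lemma entry_cvg (Y : R -> 'M[R]_n) (P X : 'M[R]_n) (c s : R) :
  (forall i j, (fun t => Y t i j) @ at_left s --> Y s i j) ->
  forall i j, (fun t => (c *: (P^T *m Y t *m P) + X) i j) @ at_left s -->
    (c *: (P^T *m Y s *m P) + X) i j.
Proof.
move=> H i j; rewrite !mxE.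
under eq_fun do rewrite !mxE.
apply: cvgD; last exact: cvg_cst.
apply: cvgMl_tmp.
apply: cvg_sumR => l.
apply: cvgMr_tmp.
rewrite mxE; under eq_fun do rewrite mxE.
apply: cvg_sumR => k.
apply: cvgMl_tmp.
exact: H.
Qed.

Lemma psd_add A B : psd A -> psd B -> psd (A + B).
Proof.
case=> sA hA [sB hB]; split; first by rewrite /Defs.symmetric linearD /= sA sB.
move=> v; have -> : (v^T *m (A + B) *m v) 0 0 = bf (A + B) v v by [].
by rewrite bfMD addr_ge0 //; [exact: hA|exact: hB].
Qed.

Lemma psd_scale c A : 0 <= c -> psd A -> psd (c *: A).
Proof.
move=> c0 [sA hA]; split; first by rewrite /Defs.symmetric linearZ /= sA.
move=> v; have -> : (v^T *m (c *: A) *m v) 0 0 = bf (c *: A) v v by [].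
by rewrite bfMZ mulr_ge0 //; exact: hA.
Qed.

Lemma psd_bf Y v : psd Y -> 0 <= bf Y v v.
Proof. by case=> _ H; exact: H. Qed.

Lemma cs_bound Y u v al be : psd Y -> bf Y u u <= al -> bf Y v v <= be ->
  `|bf Y u v| <= Num.sqrt (al * be).
Proof.
move=> pY hu hv; apply: le_trans (psd_cs_abs u v pY) _.
rewrite ler_sqrt; last by apply: mulr_ge0; apply: le_trans (psd_bf _ pY) _; eassumption.
by apply: ler_pM => //; exact: psd_bf.
Qed.

Lemma pyth p u : bf 1%:M p u = 0 -> nv (p + u) = nv p + nv u.
Proof.
move=> h; rewrite !nvE bfDl !bfDr h (@bf_sym _ _ 1%:M u p) ?trmx1 // h; ring.
Qed.

End Helpers.

Lemma int_bound (R : realType) (f : R -> R) (B : R) : 0 <= B ->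
  (forall s, 0 <= s <= 1 -> 0 <= f s <= B) ->
  (\int[@lebesgue_measure R]_(s in `[0%R, 1%R]) (f s)%:E <= B%:E)%E.
Proof.
move=> B0 H.
apply: (@le_trans _ _ (\int[@lebesgue_measure R]_(s in `[0%R, 1%R]) (cst B%:E) s)%E).
  rewrite !ge0_integralE.
  - apply: ereal_sup_le => _ [h hf <-]; exists h => // x.
    apply: le_trans (hf x) _; rewrite /patch; case: ifP => // /set_mem.
    by rewrite /= in_itv /= => /H /andP[_ h1]; rewrite lee_fin.
  - by move=> x _; rewrite lee_fin.
  - by move=> x; rewrite /= in_itv /= => /H /andP[h1 _]; rewrite lee_fin.
rewrite integral_cst; last exact: measurable_itv.
have := @lebesgue_measure_itv R `[0%R, 1%R]; rewrite /= lte_fin ltr01 => hm.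
by rewrite [X in (_ * X)%E]hm oppr0 adde0 mule1.
Qed.

Theorem lemma3p5 (R : realType) (D : nat) :
  exists C : R, forall (z w : 'M[R]_D) (pi : R -> 'M[R]_D),
    psd z -> psd w -> in_Pi_z (z + w) pi ->
    exists pi' : R -> 'M[R]_D, in_Pi_z z pi' /\
      (\int[@lebesgue_measure R]_(s in `[0%R, 1%R])
          (mnorm (pi s - pi' s))%:E <= (C * Kfun z (mnorm w))%:E)%E.
Proof.
exists (3 * D%:R) => z w pi pz pw [[pipsd [pimon picont]] pi1].
have a0 : 0 <= mnorm z := mnorm_ge0 z.
have r0 : 0 <= mnorm w := mnorm_ge0 w.
have sz : z^T = z by case: pz.
have sw : w^T = w by case: pw.
have Yle : forall s, 0 <= s <= 1 -> forall v, bf (pi s) v v <= bf z v v + bf w v v.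
  move=> s /andP[s0 s1] v; rewrite -bfMD -pi1; apply: mge_bf; apply: pimon => //.
have Ya : forall s, 0 <= s <= 1 -> forall v,
    bf (pi s) v v <= (mnorm z + mnorm w) * nv v.
  move=> s hs v; apply: le_trans (Yle s hs v) _; rewrite mulrDl.
  by apply: lerD; exact: bf_bound.
have Yent : forall s, 0 <= s <= 1 -> forall i j, `|pi s i j| <= mnorm z + mnorm w.
  move=> s hs i j; rewrite -bf_ev.
  apply: le_trans (cs_bound (pipsd s hs) (Ya s hs (ev i)) (Ya s hs (ev j))) _.
  by rewrite !nv_ev mulr1 -expr2 sqrtr_sqr ger0_norm // addr_ge0.
have zent : forall i j, `|z i j| <= mnorm z.
  move=> i j; rewrite -bf_ev.
  apply: le_trans (cs_bound pz (bf_bound z (ev i)) (bf_bound z (ev j))) _.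
  by rewrite !nv_ev mulr1 -expr2 sqrtr_sqr ger0_norm.
have fin : forall pi' : R -> 'M[R]_D, in_Pi_z z pi' -> 0 <= Kfun z (mnorm w) ->
   (forall s, 0 <= s <= 1 -> forall i j, `|(pi s - pi' s) i j| <= 3 * Kfun z (mnorm w)) ->
   exists pi' : R -> 'M[R]_D, in_Pi_z z pi' /\
      (\int[@lebesgue_measure R]_(s in `[0%R, 1%R])
          (mnorm (pi s - pi' s))%:E <= (3 * D%:R * Kfun z (mnorm w))%:E)%E.
  move=> pi' hpi' K0 hb; exists pi'; split => //.
  apply: int_bound; first by rewrite mulr_ge0 // mulr_ge0.
  move=> s hs; rewrite mnorm_ge0 /=.
  apply: le_trans (entry_bound (mulr_ge0 _ K0) (hb s hs)) _ => //.
  by rewrite mulrA (mulrC D%:R).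
have constz : in_Pi_z z (fun _ => z).
  split => //; split; [by move=> s _; exact: pz | split].
  - by move=> s s' _ _ _ c _; exact: lexx.
  - by move=> s _ i j; exact: cvg_cst.
case: (eqVneq z 0) => [z0|zn0].
  have KE : Kfun z (mnorm w) = mnorm w by rewrite /Kfun z0 eqxx.
  have aE : mnorm z = 0.
    rewrite z0 /mnorm mdotE big1 ?sqrtr0 // => i _.
    by rewrite big1 // => j _; rewrite mxE mul0r.
  apply: fin constz _ _; rewrite KE // => s hs i j.
  rewrite !mxE; apply: le_trans (ler_normB _ _) _.
  have := Yent s hs i j; have := zent i j; rewrite aE; lra.
have [P [hP [hPV [lpos hl]]]] := lam_main pz zn0.
set a := mnorm z in a0 Yle Ya Yent zent fin *.
set r := mnorm w in r0 Yle Ya Yent zent fin *.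
set l := mpos z in lpos hl *.
set sl := Num.sqrt l; set sr := Num.sqrt r; set sa := Num.sqrt a.
have sl0 : 0 < sl by rewrite sqrtr_gt0.
set rho := sr / sl.
set S := Num.sqrt ((a + r) * r).
have KE : Kfun z r = (a + r) * (1 + sa / sl) / sl * sr + S.
  by rewrite /Kfun (negbTE zn0).
have S0 : 0 <= S := sqrtr_ge0 _.
have rho0 : 0 <= rho by rewrite divr_ge0 ?sqrtr_ge0 // ltW.
have KT : (a + r) * rho + S <= Kfun z r.
  rewrite KE lerD2r.
  have -> : (a + r) * (1 + sa / sl) / sl * sr = ((a + r) * rho) * (1 + sa / sl).
    by rewrite /rho; field; rewrite gt_eqF.
  rewrite ler_peMr //; first by rewrite mulr_ge0 // addr_ge0.
  by rewrite lerDl divr_ge0 ?sqrtr_ge0 // ltW.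
have K0 : 0 <= Kfun z r.
  exact: le_trans (addr_ge0 (mulr_ge0 (addr_ge0 a0 r0) rho0) S0) KT.
case: (leP l r) => [lr|rl].
  apply: fin constz K0 _ => s hs i j.
  rewrite !mxE; apply: le_trans (ler_normB _ _) _.
  have rho1 : 1 <= rho by rewrite /rho ler_pdivlMr // mul1r ler_sqrt.
  have h : a + r <= (a + r) * rho by rewrite ler_peMr // addr_ge0.
  have := Yent s hs i j; have := zent i j; lra.
have lr0 : 0 < l + r by rewrite ltr_pwDl.
set c := l / (l + r).
have c0 : 0 <= c by rewrite divr_ge0 // ltW.
have cE : c * (l + r) = l by rewrite /c divfK // gt_eqF.
have c1 : c <= 1 by rewrite /c ler_pdivrMr // mul1r lerDl.
have zP : P^T *m z *m P = z.
  by rewrite -mulmxA hP -{1}sz -trmx_mul hP sz.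
have bzP : forall u v, bf z (P *m u) (P *m v) = bf z u v.
  by move=> u v; rewrite -bf_cong zP.
set X := z - c *: (P^T *m (z + w) *m P).
pose pi' := fun s => c *: (P^T *m pi s *m P) + X.
have sM : (z + w)^T = z + w by rewrite linearD /= sz sw.
have psdX : psd X.
  split.
    by rewrite /Defs.symmetric /X linearB /= linearZ /= !trmx_mul trmxK sM sz mulmxA.
  move=> v; change (0 <= bf X v v).
  rewrite /X bfMB bfMZ bf_cong bfMD bzP.
  have h1 := hl _ (hPV v); rewrite bzP in h1.
  have h2 := bf_bound w (P *m v).
  have h3 := nv_ge0 (P *m v).
  have h4 : c * bf w (P *m v) (P *m v) <= c * (r * nv (P *m v)) := ler_wpM2l c0 h2.
  have h5 : (1 - c) * (l * nv (P *m v)) <= (1 - c) * bf z v v.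
    by apply: ler_wpM2l => //; rewrite subr_ge0.
  have h6 : c * l * nv (P *m v) + c * r * nv (P *m v) = l * nv (P *m v).
    by rewrite -mulrDl -mulrDr cE.
  nra.
have hpi' : in_Pi_z z pi'.
  split; last by rewrite /pi' pi1 /X addrC subrK.
  split; [|split].
  - move=> s hs; apply: psd_add psdX; apply: psd_scale c0 _; exact: psd_cong (pipsd s hs).
  - move=> s s' s0 ss' s'1 C pC; rewrite /pi' !mdotDl !mdotZl !mdot_cong lerD2r.
    have pC' : psd (P *m C *m P^T) by have := psd_cong (P^T) pC; rewrite trmxK.
    exact: (ler_wpM2l c0 (pimon s s' s0 ss' s'1 _ pC')).
  - move=> s hs i j; apply: entry_cvg => i' j'; exact: picont.
apply: fin hpi' K0 _ => s hs i j.
have pY := pipsd s hs.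
set Y := pi s in pY *.
have E : (Y - pi' s) i j = bf Y ((ev i : 'cV[R]_D) - P *m (ev i : 'cV[R]_D)) (ev j : 'cV[R]_D) + bf Y (P *m (ev i : 'cV[R]_D)) ((ev j : 'cV[R]_D) - P *m (ev j : 'cV[R]_D))
   + (1 - c) * bf Y (P *m (ev i : 'cV[R]_D)) (P *m (ev j : 'cV[R]_D)) - (1 - c) * bf z (ev i : 'cV[R]_D) (ev j : 'cV[R]_D)
   + c * bf w (P *m (ev i : 'cV[R]_D)) (P *m (ev j : 'cV[R]_D)).
  rewrite -bf_ev /pi' /X /= -/Y !bfMB (bfMD (c *: (P^T *m Y *m P))) (bfMB z) !bfMZ !bf_cong (bfMD z w) bzP.
  rewrite !bfDl !bfDr !bfNl !bfNr; ring.
rewrite E.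
have zu : forall e : 'cV[R]_D, z *m (e - P *m e) = 0.
  by move=> e; rewrite mulmxBr mulmxA hP subrr.
have bzu : forall e : 'cV[R]_D, bf z (e - P *m e) (e - P *m e) = 0.
  by move=> e; rewrite /bf -mulmxA (zu e) mulmx0 mxE.
have nvP : forall k : 'I_D, nv (P *m ev k) <= 1 /\ nv (ev k - P *m ev k) <= 1.
  move=> k.
  have h0 : bf 1%:M (P *m ev k) (ev k - P *m ev k) = 0.
    have [x hx] := hPV (ev k).
    by rewrite /bf mulmx1 {1}hx trmx_mul -mulmxA sz (zu (ev k)) mulmx0 mxE.
  have := pyth h0; rewrite addrC subrK nv_ev => h.
  have := nv_ge0 (P *m ev k); have := nv_ge0 (ev k - P *m ev k).
  by split; lra.
have bYu : forall k, bf Y (ev k - P *m ev k) (ev k - P *m ev k) <= r.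
  move=> k; apply: le_trans (Yle s hs _) _; rewrite bzu add0r.
  apply: le_trans (bf_bound w _) _; apply: ler_piMr => //; exact: (nvP k).2.
have bYP : forall k, bf Y (P *m ev k) (P *m ev k) <= a + r.
  move=> k; apply: le_trans (Ya s hs _) _; apply: ler_piMr; first exact: addr_ge0.
  exact: (nvP k).1.
have bYe : forall k, bf Y (ev k) (ev k) <= a + r.
  by move=> k; apply: le_trans (Ya s hs _) _; rewrite nv_ev mulr1.
have bwP : forall k, bf w (P *m ev k) (P *m ev k) <= r.
  move=> k; apply: le_trans (bf_bound w _) _; apply: ler_piMr => //; exact: (nvP k).1.
have A1 : `|bf Y (ev i - P *m ev i) (ev j)| <= S.
  by apply: le_trans (cs_bound pY (bYu i) (bYe j)) _; rewrite mulrC.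
have A2 : `|bf Y (P *m ev i) (ev j - P *m ev j)| <= S.
  exact: cs_bound pY (bYP i) (bYu j).
have ar0 : 0 <= a + r by exact: addr_ge0.
have A3 : `|bf Y (P *m ev i) (P *m ev j)| <= a + r.
  apply: le_trans (cs_bound pY (bYP i) (bYP j)) _.
  by rewrite -expr2 sqrtr_sqr ger0_norm.
have A4 : `|bf z (ev i) (ev j)| <= a by rewrite bf_ev.
have A5 : `|bf w (P *m ev i) (P *m ev j)| <= r.
  apply: le_trans (cs_bound pw (bwP i) (bwP j)) _.
  by rewrite -expr2 sqrtr_sqr ger0_norm.
have rS : r <= S.
  rewrite -[X in X <= _](ger0_norm r0) -sqrtr_sqr ler_sqrt ?mulr_ge0 //.
  by rewrite expr2 ler_wpM2r // lerDr.
have crho : 1 - c <= rho.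
  have rho1 : rho <= 1.
    by rewrite /rho ler_pdivrMr // mul1r ler_sqrt // ltW.
  have hr : rho ^+ 2 * l = r.
    by rewrite /rho expr_div_n !sqr_sqrtr ?(ltW lpos) // divfK // gt_eqF.
  have h1 : (1 - c) * (l + r) = r by rewrite mulrBl mul1r cE; ring.
  have h2 : rho ^+ 2 * l <= rho * l.
    by rewrite ler_pM2r // expr2 ler_piMr.
  rewrite leNgt; apply/negP => H.
  have : rho * (l + r) < (1 - c) * (l + r) by rewrite ltr_pM2r.
  nra.
have c1' : 0 <= 1 - c by rewrite subr_ge0.
have B3 : `|(1 - c) * bf Y (P *m ev i) (P *m ev j)| <= (a + r) * rho.
  rewrite normrM ger0_norm // mulrC; exact: ler_pM.
have B4 : `|(1 - c) * bf z (ev i) (ev j)| <= (a + r) * rho.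
  rewrite normrM ger0_norm // mulrC; apply: ler_pM => //.
  by apply: le_trans A4 _; rewrite lerDl.
have B5 : `|c * bf w (P *m ev i) (P *m ev j)| <= S.
  rewrite normrM ger0_norm //; apply: le_trans rS.
  by rewrite -[X in _ <= X]mul1r; exact: ler_pM.
move: A1 A2 B3 B4 B5; rewrite !ler_norml => /andP[a1 a2] /andP[a3 a4] /andP[a5 a6] /andP[a7 a8] /andP[a9 a10].
apply/andP; split; lra.
Qed.
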